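(* Let $I$ be a conditional indicator w.r.t. $\mathcal{H}$ which is conditionally convex and whose domain $\mathbb{D}_I$ is $\mathcal{H}$-decomposable. Then $I$ is regular.
   Context: Let $(\Omega,\mathcal{F},\mathbb{P})$ be a probability space with $\mathcal{F}$ complete, and $\mathcal{H}\subseteq\mathcal{F}$ a complete sub-$\sigma$-algebra. $\overline{\mathbb{R}}=\mathbb{R}\cup\{\pm\infty\}$ with conventions $r\pm\infty=\pm\infty$, $\infty-\infty=0$, $\infty+\infty=\infty$, $0\times(\pm\infty)=0$; $\mathbb{L}^0(G,\mathcal{G})$ is the set of $\mathcal{G}$-measurable random variables a.s. valued in $G$. $\operatorname{ess\,sup}_{\mathcal{H}}(X)$ is the smallest $\mathcal{H}$-measurable random variable dominating $X$ a.s., $\operatorname{ess\,inf}_{\mathcal{H}}(X)=-\operatorname{ess\,sup}_{\mathcal{H}}(-X)$. A conditional indicator w.r.t. $\mathcal{H}$ is a map $I:\mathbb{D}_I\to\mathbb{L}^0(\overline{\mathbb{R}},\mathcal{H})$, $0\in\mathbb{D}_I\subseteq\mathbb{L}^0(\overline{\mathbb{R}},\mathcal{F})$, with $I(X)\in[\operatorname{ess\,inf}_{\mathcal{H}}(X),\operatorname{ess\,sup}_{\mathcal{H}}(X)]$ a.s. and $\mathbb{D}_I+\mathbb{L}^0(\overline{\mathbb{R}},\mathcal{H})\subseteq\mathbb{D}_I$. $I$ is conditionally convex if for every $\alpha\in\mathbb{L}^0([0,1],\mathcal{H})$, $\alpha\mathbb{D}_I+(1-\alpha)\mathbb{D}_I\subseteq\mathbb{D}_I$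 and $I(\alpha X+(1-\alpha)Y)\le\alpha I(X)+(1-\alpha)I(Y)$ for $X,Y\in\mathbb{D}_I$. $\mathbb{D}_I$ is $\mathcal{H}$-decomposable if $X1_H+Y1_{\Omega\setminus H}\in\mathbb{D}_I$ for $X,Y\in\mathbb{D}_I$, $H\in\mathcal{H}$. $I$ is regular if $\mathbb{D}_I$ is $\mathcal{H}$-decomposable and for $X,Y\in\mathbb{D}_I$, $H\in\mathcal{H}$, $X1_H=Y1_H$ implies $I(X)1_H=I(Y)1_H$. *)

(* Defs.v *)
From HB Require Import structures.
From mathcomp Require Import all_boot all_order all_algebra.
From mathcomp Require Import all_classical all_reals all_analysis.
From mathcomp Require Import measurable_realfun.
Import Order.TTheory GRing.Theory Num.Theory.
Set Implicit Arguments. Unset Strict Implicit. Unset Printing Implicit Defensive.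
Local Open Scope classical_set_scope.
Local Open Scope ring_scope.
Local Open Scope ereal_scope.

Section CondIndicator.
Context {d : measure_display} {T : measurableType d} {R : realType}.

Definition eadd (x y : \bar R) : \bar R :=
  match x, y with
  | +oo, -oo => 0
  | -oo, +oo => 0
  | _, _ => x + y
  end.

(* pointwise operations on random variables; multiplication is mathcomp's
   mule, for which 0 * (+-oo) = 0 as in the paper *)
Definition radd (X Y : T -> \bar R) : T -> \bar R := fun w => eadd (X w) (Y w).
Definition rmul (X Y : T -> \bar R) : T -> \bar R := fun w => X w * Y w.
Definition rind (A : set T) : T -> \bar R := fun w => (\1_A w)%:E.
Definition rcst (c : \bar R) : T -> \bar R := fun _ => c.
Definition ropp (X : T -> \bar R) : T -> \bar R := fun w => - X w.

Definition complete_prob (P : probability T R) :=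
  forall N, measurable N -> P N = 0%E -> forall A, A `<=` N -> measurable A.

Definition complete_sub_sigma (P : probability T R) (H : set (set T)) :=
  sigma_algebra setT H /\ (forall A, H A -> measurable A) /\
  (forall N, measurable N -> P N = 0%E -> H N).

Definition Hmeas (H : set (set T)) (X : T -> \bar R) :=
  forall B : set (\bar R), measurable B -> H (X @^-1` B).

Definition ale (P : probability T R) (X Y : T -> \bar R) :=
  {ae P, forall w, X w <= Y w}.
Definition aeq (P : probability T R) (X Y : T -> \bar R) :=
  {ae P, forall w, X w = Y w}.

Definition is_esssupH (P : probability T R) (H : set (set T)) (X S : T -> \bar R) :=
  Hmeas H S /\ ale P X S /\
  (forall S', Hmeas H S' -> ale P X S' -> ale P S S').
Definition is_essinfH (P : probability T R) (H : set (set T)) (X s : T -> \bar R) :=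
  is_esssupH P H (ropp X) (ropp s).

(* Elements of L^0 are a.s.-equivalence classes; we represent them by
   functions and require D and I to be compatible with a.s. equality. *)
Definition L0_compatible (P : probability T R)
  (D : set (T -> \bar R)) (I : (T -> \bar R) -> T -> \bar R) :=
  (forall X Y, D X -> measurable_fun setT Y -> aeq P X Y -> D Y) /\
  (forall X Y, D X -> D Y -> aeq P X Y -> aeq P (I X) (I Y)).

Definition cond_indicator (P : probability T R) (H : set (set T))
  (D : set (T -> \bar R)) (I : (T -> \bar R) -> T -> \bar R) :=
  L0_compatible P D I /\
  D (rcst 0) /\
  (forall X, D X -> measurable_fun setT X) /\
  (forall X, D X -> Hmeas H (I X)) /\
  (forall X, D X -> forall S s, is_esssupH P H X S -> is_essinfH P H X s ->
     ale P s (I X) /\ ale P (I X) S) /\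
  (forall X Z, D X -> Hmeas H Z -> D (radd X Z)).

Definition convcomb (a X Y : T -> \bar R) : T -> \bar R :=
  radd (rmul a X) (rmul (fun w => 1 - a w) Y).

Definition cond_convex (P : probability T R) (H : set (set T))
  (D : set (T -> \bar R)) (I : (T -> \bar R) -> T -> \bar R) :=
  forall a : T -> \bar R, Hmeas H a -> {ae P, forall w, 0 <= a w <= 1} ->
  forall X Y, D X -> D Y ->
    D (convcomb a X Y) /\ ale P (I (convcomb a X Y)) (convcomb a (I X) (I Y)).

Definition H_decomposable (H : set (set T)) (D : set (T -> \bar R)) :=
  forall X Y A, D X -> D Y -> H A ->
    D (radd (rmul X (rind A)) (rmul Y (rind (~` A)))).

Definition regular (P : probability T R) (H : set (set T))
  (D : set (T -> \bar R)) (I : (T -> \bar R) -> T -> \bar R) :=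
  H_decomposable H D /\
  (forall X Y A, D X -> D Y -> H A ->
     aeq P (rmul X (rind A)) (rmul Y (rind A)) ->
     aeq P (rmul (I X) (rind A)) (rmul (I Y) (rind A))).

End CondIndicator.

(* Main.v *)
Require Import Defs.
From HB Require Import structures.
From mathcomp Require Import all_boot all_order all_algebra.
From mathcomp Require Import all_classical all_reals all_analysis.
From mathcomp Require Import measurable_realfun.
Import Order.TTheory GRing.Theory Num.Theory.
Local Open Scope classical_set_scope.
Local Open Scope ring_scope.
Local Open Scope ereal_scope.

Lemma Hmeas_rind (d : measure_display) (T : measurableType d) (R : realType)
  (H : set (set T)) (A : set T) :
  sigma_algebra setT H -> H A -> Hmeas (R:=R) H (rind A).
Proof.
move=> [H0 HC _] HA B _.
have HT : H setT by have := HC _ H0; rewrite setD0.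
have HnA : H (~` A) by have := HC _ HA; rewrite setTD.
have [B1|B1] := pselect (B 1%:E); have [B0|B0] := pselect (B 0%:E).
- suff -> : rind A @^-1` B = setT by [].
  apply/seteqP; split=> w //= _; rewrite /rind indicE.
  by case: (w \in A).
- suff -> : rind A @^-1` B = A by [].
  apply/seteqP; split=> w /=; rewrite /rind indicE.
    by case: (boolP (w \in A)) => [/set_mem|] //.
  by move=> Aw; rewrite mem_set.
- suff -> : rind A @^-1` B = ~` A by [].
  apply/seteqP; split=> w /=; rewrite /rind indicE.
    by case: (boolP (w \in A)) => [|/negP Aw _ /mem_set] //.
  by move=> Aw; rewrite memNset.
- suff -> : rind A @^-1` B = set0 by [].
  apply/seteqP; split=> w //= ; rewrite /rind indicE.
  by case: (w \in A).
Qed.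

Lemma convcomb_rind (d : measure_display) (T : measurableType d) (R : realType)
  (A : set T) (X Y : T -> \bar R) w :
  convcomb (rind A) X Y w = if w \in A then X w else Y w.
Proof.
rewrite /convcomb /radd /rmul /rind indicE.
case: (w \in A) => /=.
  by rewrite mul1e subee // mul0e /eadd; case: (X w) => [r| |] //=; rewrite adde0.
by rewrite mul0e sube0 mul1e /eadd; case: (Y w) => [r| |] //=; rewrite add0e.
Qed.

Lemma one_side (d : measure_display) (T : measurableType d) (R : realType)
  (P : probability T R) (H : set (set T))
  (D : set (T -> \bar R)) (I : (T -> \bar R) -> T -> \bar R) X Y A :
  complete_sub_sigma P H ->
  cond_indicator P H D I -> cond_convex P H D I ->
  D X -> D Y -> H A ->
  aeq P (rmul X (rind A)) (rmul Y (rind A)) ->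
  {ae P, forall w, A w -> I Y w <= I X w}.
Proof.
move=> [Hsig _] [[_ L0I] [_ [Dmeas _]]] Hconv DX DY HA hXY.
have Ha := @Hmeas_rind _ _ R _ _ Hsig HA.
have a01 : {ae P, forall w, 0 <= rind (R:=R) A w <= 1}.
  apply: (@aeW _ _ _ P) => w; rewrite /rind indicE; case: (w \in A); rewrite /= ?lee_fin ?ler01 ?lexx ?ler01 //.
have [DZ hle] := Hconv _ Ha a01 X Y DX DY.
have eZY : aeq P (convcomb (rind A) X Y) Y.
  apply: filterS hXY => w; rewrite convcomb_rind /rmul /rind indicE.
  by case: (w \in A); rewrite ?mule1.
have := L0I _ _ DZ DY eZY.
move=> e2; apply: filterS2 e2 hle => w e2 le Aw.
by rewrite -e2; move: le; rewrite convcomb_rind mem_set.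
Qed.

Theorem mainTheorem7 (d : measure_display) (T : measurableType d) (R : realType)
  (P : probability T R) (H : set (set T))
  (D : set (T -> \bar R)) (I : (T -> \bar R) -> T -> \bar R) :
  complete_prob P -> complete_sub_sigma P H ->
  cond_indicator P H D I -> cond_convex P H D I -> H_decomposable H D ->
  regular P H D I.
Proof.
move=> _ Hs Hi Hc Hd; split => // X Y A DX DY HA hXY.
have hYX : aeq P (rmul Y (rind A)) (rmul X (rind A)).
  by apply: filterS hXY => w ->.
have h1 := @one_side _ _ _ _ _ _ _ X Y A Hs Hi Hc DX DY HA hXY.
have h2 := @one_side _ _ _ _ _ _ _ Y X A Hs Hi Hc DY DX HA hYX.
apply: filterS2 h1 h2 => w h1 h2; rewrite /rmul /rind indicE.
case: (boolP (w \in A)) => [Aw|_] /=; last by rewrite !mule0.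
rewrite !mule1; apply: le_anti; rewrite (h1 (set_mem Aw)).
by rewrite (h2 (set_mem Aw)).
Qed.
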